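(* Let $k\geq1$, $n\geq2k$, let $\mathcal{S},\mathcal{T}$ be antichains in $\mathcal{F}_{2k}^{[1,n]}$ with $\mathcal{T}\prec_p\mathcal{S}$, let $j\geq1$, and for $i\geq1$ let $$D_i:=\Big(B\big(\mathcal{S}([i,i+1]),i+2\big)\setminus B\big(\mathcal{T}([i,i+1]),i+2\big)\Big)*\overline{[i,i+1]}.$$ If $D_{j+1}$ is not the void complex, then $$D_j\cap D_{j+1}=\Big(B\big(\mathcal{S}([j+1,j+2]),j+2\big)\setminus B\big(\mathcal{T}([j,j+1]),j+2\big)\Big)*\overline{\{j+1\}}.$$
   Context: Notation: $[m,n]=\{m,\dots,n\}$; $d$-subsets of $[n]$ are identified with increasing vectors; $G\leq_p F$ means componentwise $\leq$ and $G\prec_p F$ means $G\leq_p F-\mathbf{1}_d$ ($\mathbf{1}_d$ the all-ones vector). For $r\geq1$, $\mathcal{F}_{2r}^{[m,n]}$ is the set of sets $\{i_1,i_1+1,\dots,i_r,i_r+1\}$ with $m\leq i_1$, $i_r\leq n-1$, $i_j\leq i_{j+1}-2$, ordered by $\leq_p$; $\mathcal{F}_0^{[m,n]}=\{\emptyset\}$. For antichains, $\mathcal{T}\prec_p\mathcal{S}$ means every $G\in\mathcal{T}$ satisfies $G\prec_p F$ for some $F\in\mathcal{S}$. $\mathcal{F}_{2r}(\mathcal{S})$ is the order ideal generated by $\mathcal{S}$. For $1\leq\ell\leq k$ and $J=[j,j+2\ell-1]$, $\mathcal{S}(J)\subseteq\mathcal{F}_{2(k-\ell)}^{[1,n]}$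 is the set of maximal elements of $\{H\in\mathcal{F}_{2(k-\ell)}^{[1,n]}: H\subseteq[j+2\ell,n],\ J\cup H\in\mathcal{F}(\mathcal{S})\}$. $B(\mathcal{S}(J),m)$ is the pure simplicial complex whose facets are the sets of $\mathcal{F}_{2(k-\ell)}(\mathcal{S}(J))\cap\mathcal{F}_{2(k-\ell)}^{[m,n]}$. For pure complexes $X,Y$, $X\setminus Y$ is the complex generated by the facets of $X$ that are not facets of $Y$. $\overline{V}$ is the full simplex on $V$, $*$ is the join (join with the void complex is void). *)

(* Defs.v *)
From mathcomp Require Import all_boot.
From mathcomp Require Import finmap.
Set Implicit Arguments. Unset Strict Implicit. Unset Printing Implicit Defensive.
Local Open Scope fset_scope.

Definition setfam := {fset nat} -> Prop.

(* the set {i_1,i_1+1,...,i_r,i_r+1} built from the starting points s *)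
Definition domset (s : seq nat) : {fset nat} :=
  [fset x | x in flatten [seq [:: i; i.+1] | i <- s]].

(* G \in F_{2r}^{[m,n]} ; for r = 0 this is exactly {emptyset} *)
Definition Fam (r m n : nat) : setfam := fun G =>
  exists s : seq nat,
    [/\ size s = r,
        path (fun a b => a.+2 <= b) (head 0 s) (behead s),
        (forall i, i \in s -> m <= i /\ i.+1 <= n) &
        G = domset s].

(* sets identified with increasing vectors *)
Definition incvec (G : {fset nat}) : seq nat := sort leq (enum_fset G).

Definition lep (G F : {fset nat}) : bool := all2 leq (incvec G) (incvec F).

(* G <_p F : G <=_p F - 1_d, i.e. componentwise a <= b - 1 *)
Definition precp (G F : {fset nat}) : bool :=
  all2 (fun a b => a.+1 <= b) (incvec G) (incvec F).

Definition antichain (k n : nat) (S : setfam) : Prop :=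
  (forall F, S F -> Fam k 1 n F) /\
  (forall F G, S F -> S G -> lep F G -> F = G).

Definition precp_fam (T S : setfam) : Prop :=
  forall G, T G -> exists F, S F /\ precp G F.

Definition ideal (r n : nat) (S : setfam) : setfam := fun G =>
  Fam r 1 n G /\ exists F, S F /\ lep G F.

Definition intv (a b : nat) : {fset nat} := [fset x | x in iota a (b.+1 - a)].

(* S(J) for J = [j, j+2l-1]  (S an antichain in F_{2k}^{[1,n]}) *)
Definition SJ (k n : nat) (S : setfam) (l j : nat) : setfam :=
  let J := intv j (j + 2 * l - 1) in
  let P := fun H => [/\ Fam (k - l) 1 n H,
                        H `<=` intv (j + 2 * l) n &
                        ideal k n S (J `|` H)] in
  fun H => P H /\ forall H', P H' -> lep H H' -> H' = H.

(* simplicial complexes = families of faces *)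
Definition gen (Fs : setfam) : setfam := fun s => exists F, Fs F /\ s `<=` F.
Definition facets (X : setfam) : setfam := fun F =>
  X F /\ forall G, X G -> F `<=` G -> G = F.
Definition cdiff (X Y : setfam) : setfam :=
  gen (fun F => facets X F /\ ~ facets Y F).
Definition simplex (V : {fset nat}) : setfam := fun s => s `<=` V.
Definition join (X Y : setfam) : setfam := fun s =>
  exists a b, [/\ X a, Y b & s = a `|` b].
Definition cap (X Y : setfam) : setfam := fun s => X s /\ Y s.
Definition voidc (X : setfam) : Prop := forall s, ~ X s.
Definition ceq (X Y : setfam) : Prop := forall s, X s <-> Y s.

(* B(S', m) : pure complex with facets F_{2r}(S') \cap F_{2r}^{[m,n]}, r = k - l *)
Definition Bc (r n : nat) (S' : setfam) (m : nat) : setfam :=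
  gen (fun G => ideal r n S' G /\ Fam r m n G).

Definition Dc (k n : nat) (S T : setfam) (i : nat) : setfam :=
  join (cdiff (Bc (k - 1) n (SJ k n S 1 i) (i + 2))
              (Bc (k - 1) n (SJ k n T 1 i) (i + 2)))
       (simplex (intv i i.+1)).

(* Main.v *)
Require Import Defs.
From mathcomp Require Import all_boot.
From mathcomp Require Import finmap.
From mathcomp Require Import zify.
From Stdlib Require Import Classical.
Local Open Scope fset_scope.

Section Helpers.
Set Implicit Arguments. Unset Strict Implicit. Unset Printing Implicit Defensive.
Local Open Scope nat_scope.

Definition flat (s : seq nat) := flatten [seq [:: i; i.+1] | i <- s].
Definition gap2 : rel nat := fun a b => a.+2 <= b.
Definition good (m n : nat) (s : seq nat) :=
  sorted gap2 s && all (fun i => (m <= i) && (i < n)) s.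

Lemma flat_cons a s : flat (a :: s) = a :: a.+1 :: flat s.
Proof. by []. Qed.

Lemma mem_flat x s : (x \in flat s) = has (fun i => (i == x) || (i.+1 == x)) s.
Proof.
elim: s => [|a s IH] //. rewrite flat_cons !inE IH /=.
by rewrite [x == a]eq_sym [x == a.+1]eq_sym orbA.
Qed.

Lemma mem_ds x s : (x \in domset s) = (x \in flat s).
Proof. by rewrite /domset inE. Qed.

Lemma mem_dsP x s : reflect (exists2 i, i < size s &
   (nth 0 s i == x) || ((nth 0 s i).+1 == x)) (x \in domset s).
Proof. rewrite mem_ds mem_flat. exact: has_nthP. Qed.

Lemma flat_sorted s : sorted gap2 s -> sorted ltn (flat s).
Proof.
elim: s => [|a s IH] // Hs.
rewrite flat_cons /= ltnSn /=.
case: s IH Hs => [|b s] IH Hs //.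
move: Hs => /= /andP [Hab Hs].
have := IH Hs. rewrite !flat_cons /= => ->. by rewrite andbT.
Qed.

Lemma size_flat s : size (flat s) = 2 * size s.
Proof. elim: s => [|a s IH] //. rewrite flat_cons /= IH. lia. Qed.

Lemma incvec_ds s : sorted gap2 s -> incvec (domset s) = flat s.
Proof.
move=> Hs. have Hf := flat_sorted Hs.
apply: (sorted_eq leq_trans anti_leq).
- apply: sort_sorted. exact: leq_total.
- apply: sub_sorted Hf. move=> a b /ltnW. done.
- rewrite perm_sort. apply: uniq_perm.
  + exact: fset_uniq.
  + apply: (sorted_uniq ltn_trans) Hf. exact: ltnn.
  + move=> x. by rewrite -mem_ds.
Qed.

Lemma lep_ds s t : sorted gap2 s -> sorted gap2 t ->
  lep (domset s) (domset t) = all2 leq s t.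
Proof.
move=> Hs Ht. rewrite /lep !incvec_ds //.
elim: s t {Hs Ht} => [|a s IH] [|b t]; rewrite ?flat_cons //=.
by rewrite IH ltnS andbA andbb.
Qed.

Lemma precp_ds s t : sorted gap2 s -> sorted gap2 t ->
  precp (domset s) (domset t) = all2 (fun a b => a.+1 <= b) s t.
Proof.
move=> Hs Ht. rewrite /precp !incvec_ds //.
elim: s t {Hs Ht} => [|a s IH] [|b t]; rewrite ?flat_cons //=.
by rewrite IH ltnS andbA andbb.
Qed.

Lemma all2P (r : rel nat) s t : reflect (size s = size t /\
  forall i, i < size s -> r (nth 0 s i) (nth 0 t i)) (all2 r s t).
Proof.
elim: s t => [|a s IH] [|b t] /=.
- by constructor.
- by constructor; case.
- by constructor; case.
- apply: (iffP andP) => [[Hab /IH [Hs Hi]]|[Hs Hi]].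
  + split; first by rewrite Hs.
    by case=> [|i] //= Hi'; apply: Hi.
  + split; first exact: (Hi 0).
    apply/IH; split; first by case: Hs.
    move=> i Hi'; exact: (Hi i.+1).
Qed.

Lemma goodP m n s : good m n s <->
  (forall i, i.+1 < size s -> nth 0 s i + 2 <= nth 0 s i.+1) /\
  (forall i, i < size s -> m <= nth 0 s i < n).
Proof.
rewrite /good. split.
- move=> /andP [/(sortedP 0) H1 /(all_nthP 0) H2]. split.
  + move=> i Hi. have := H1 i Hi. rewrite /gap2. lia.
  + exact: H2.
- move=> [H1 H2]. apply/andP; split.
  + apply/(sortedP 0) => i Hi. have := H1 i Hi. rewrite /gap2. lia.
  + by apply/(all_nthP 0).
Qed.

Lemma good_sorted m n s : good m n s -> sorted gap2 s.
Proof. by case/andP. Qed.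

Lemma gap_nth s i d : sorted gap2 s -> i + d < size s ->
  nth 0 s i + 2 * d <= nth 0 s (i + d).
Proof.
move=> /(sortedP 0) Hs. elim: d => [|d IH] Hd.
- by rewrite addn0 muln0 addn0.
- have Hd' : i + d < size s by lia.
  have := IH Hd'.
  have := Hs (i + d). rewrite addnS in Hd. move=> /(_ Hd). rewrite /gap2 addnS. lia.
Qed.

Lemma good_lo m n s i : good m n s -> i < size s -> m + 2 * i <= nth 0 s i.
Proof.
move=> Hg Hi. have [_ H2] := (goodP m n s).1 Hg.
have := @gap_nth s 0 i (good_sorted Hg). rewrite add0n => /(_ Hi).
have := H2 0 (leq_ltn_trans (leq0n _) Hi). lia.
Qed.

Lemma Fam_good r m n G : Fam r m n G <->
  exists s, [/\ size s = r, good m n s & G = domset s].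
Proof.
split.
- move=> [s [Hs Hp Hm HG]]. exists s; split => //.
  apply/andP; split.
  + by case: s Hp {Hs Hm HG}.
  + apply/allP => i /Hm. lia.
- move=> [s [Hs /andP [Hp /allP Hm] HG]]. exists s; split => //.
  + by case: s Hp {Hs Hm HG}.
  + move=> i /Hm. lia.
Qed.

Lemma good_mono m m' n s : m' <= m -> good m n s -> good m' n s.
Proof.
move=> Hm /goodP [H1 H2]. apply/goodP; split => // i /H2. lia.
Qed.

Lemma card_ds s : sorted gap2 s -> #|` domset s| = 2 * size s.
Proof.
move=> Hs. rewrite -size_flat -(incvec_ds Hs) /incvec size_sort. by [].
Qed.

Lemma gap_nth2 s i j : sorted gap2 s -> i <= j -> j < size s ->
  nth 0 s i + 2 * (j - i) <= nth 0 s j.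
Proof.
move=> Hs Hij Hj. have := @gap_nth s i (j - i) Hs. rewrite subnKC //. exact.
Qed.

Lemma all2_leq_refl s : all2 leq s s.
Proof. by elim: s => //= a s ->; rewrite leqnn. Qed.

Lemma all2_leq_trans s t u : all2 leq s t -> all2 leq t u -> all2 leq s u.
Proof.
elim: s t u => [|a s IH] [|b t] [|c u] //= /andP [H1 H2] /andP [H3 H4].
by rewrite (leq_trans H1 H3) (IH _ _ H2 H4).
Qed.

Lemma sumn_le s t : all2 leq s t -> sumn s <= sumn t.
Proof.
elim: s t => [|a s IH] [|b t] //= /andP [H1 H2]. by apply: leq_add => //; apply: IH.
Qed.

Lemma sumn_lt s t : all2 leq s t -> s != t -> sumn s < sumn t.
Proof.
elim: s t => [|a s IH] [|b t] //= /andP [H1 H2] Hne.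
have Hst := sumn_le H2.
case: (ltnP a b) => Hab.
- lia.
- have Eab : a = b by lia. subst b.
  have Hne' : s != t by apply: contraNneq Hne => ->.
  have := IH _ H2 Hne'. lia.
Qed.

Definition meetS (s t : seq nat) :=
  mkseq (fun i => minn (nth 0 s i) (nth 0 t i)) (size s).

Lemma size_meetS s t : size (meetS s t) = size s.
Proof. by rewrite size_mkseq. Qed.

Lemma nth_meetS s t i : i < size s -> nth 0 (meetS s t) i = minn (nth 0 s i) (nth 0 t i).
Proof. move=> Hi. by rewrite nth_mkseq. Qed.

Lemma meet_good m n s t : size s = size t -> good m n s -> good m n t ->
  good m n (meetS s t).
Proof.
move=> Hst /goodP [S1 S2] /goodP [T1 T2]. apply/goodP. rewrite size_meetS. split.
- move=> i Hi. rewrite !nth_meetS //; last by lia.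
  have Hi' : i.+1 < size t by rewrite -Hst.
  have := S1 i Hi. have := T1 i Hi'. lia.
- move=> i Hi. rewrite nth_meetS //. have Hi' : i < size t by rewrite -Hst.
  have := S2 i Hi. have := T2 i Hi'. lia.
Qed.

Lemma meet_le_l s t : all2 leq (meetS s t) s.
Proof.
apply/all2P; rewrite size_meetS; split => // i Hi. rewrite nth_meetS //. exact: geq_minl.
Qed.

Lemma meet_le_r s t : size s = size t -> all2 leq (meetS s t) t.
Proof.
move=> Hst. apply/all2P; rewrite size_meetS; split => // i Hi. rewrite nth_meetS //. exact: geq_minr.
Qed.

Lemma meet_mem x s t : size s = size t -> sorted gap2 s -> sorted gap2 t ->
  x \in domset s -> x \in domset t -> x \in domset (meetS s t).
Proof.
move=> Hst Hs Ht /mem_dsP [p Hp Hpx] /mem_dsP [q Hq Hqx].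
apply/mem_dsP. rewrite size_meetS.
case: (ltngtP p q) => Hpq.
- exists q; first by rewrite Hst.
  rewrite nth_meetS; last by rewrite Hst.
  have Hq' : q < size s by rewrite Hst.
  have := gap_nth2 Hs (ltnW Hpq) Hq'.
  move: Hpx Hqx. lia.
- exists p => //. rewrite nth_meetS //.
  have Hp' : p < size t by rewrite -Hst.
  have := gap_nth2 Ht (ltnW Hpq) Hp'.
  move: Hpx Hqx. lia.
- subst q. exists p => //. rewrite nth_meetS //. move: Hpx Hqx. lia.
Qed.


Lemma step m n Y G (tau : {fset nat}) :
  good m n Y -> good m n G -> size Y = size G -> all2 leq Y G -> Y != G ->
  tau `<=` domset Y -> tau `<=` domset G ->
  exists Z, [/\ good m n Z, size Z = size Y, all2 leq Y Z, Y != Z &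
     [/\ all2 leq Z G, all2 leq Z (map succn Y) & tau `<=` domset Z]].
Proof.
move=> HY HG Hsz HYG Hne HtY HtG.
have sY := good_sorted HY. have sG := good_sorted HG.
move/goodP: (HY) => [Y1 Y2]; move/goodP: (HG) => [G1 G2].
move/all2P: (HYG) => [_ Hle]. clear HY HG.
have exP : exists i, (i < size Y) && (nth 0 Y i < nth 0 G i).
  have /existsP [i Hi] : [exists i : 'I_(size Y), nth 0 Y i < nth 0 G i].
    apply: contraNT Hne => /existsPn H. apply/eqP/(eq_from_nth (x0:=0)) => // i Hi.
    have := H (Ordinal Hi). have := Hle i Hi. rewrite /= -leqNgt. lia.
  by exists i; rewrite ltn_ord.
case: (ex_minnP exP) => t /andP [Ht Hyt] Hmin.
have HminP : forall q, q < size Y -> q < t -> nth 0 Y q = nth 0 G q.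
  move=> q Hq Hqt. have := Hle q Hq. case: (ltnP (nth 0 Y q) (nth 0 G q)) => H1 H2.
  - have := Hmin q. rewrite Hq H1 => /(_ isT). lia.
  - lia.
pose b i := (t <= i) && (nth 0 Y i == nth 0 Y t + 2 * (i - t)).
pose Z := mkseq (fun i => nth 0 Y i + b i) (size Y).
have nthZ : forall i, i < size Y -> nth 0 Z i = nth 0 Y i + b i.
  by move=> i Hi; rewrite nth_mkseq.
have szZ : size Z = size Y by rewrite size_mkseq.
have bE : forall i, b i = (t <= i) && (nth 0 Y i == nth 0 Y t + 2 * (i - t)) by [].
clearbody Z. clearbody b.
have bnd : forall i, i < size Y -> b i -> nth 0 Y i + 1 <= nth 0 G i.
  move=> i Hi. rewrite bE => /andP [Hti /eqP Hyi].
  have Hi' : i < size G by rewrite -Hsz.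
  have := gap_nth2 sG Hti Hi'. lia.
have ZG : forall i, i < size Y -> nth 0 Z i <= nth 0 G i.
  move=> i Hi. rewrite nthZ //. have := Hle i Hi. have := bnd i Hi.
  case: (b i) => /=; lia.
exists Z; split.
- apply/goodP; rewrite szZ; split.
  + move=> i Hi. rewrite !nthZ //; last by lia.
    have H1 := Y1 i Hi.
    have Hti1 : t <= i.+1 -> t <= i \/ t = i.+1 by lia.
    rewrite !bE.
    case: (boolP (t <= i)) => Hti; case: (boolP (t <= i.+1)) => Hti2 /=.
    * case: (boolP (nth 0 Y i == _)) => E1; case: (boolP (nth 0 Y i.+1 == _)) => E2 /=.
      -- lia.
      -- move/eqP: E1 => E1. have E3 : nth 0 Y i.+1 != nth 0 Y i + 2.
           apply: contra E2 => /eqP ->. rewrite E1. apply/eqP. lia.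
         move: H1 E3. lia.
      -- lia.
      -- lia.
    * lia.
    * case: (boolP (nth 0 Y i.+1 == _)) => E2 /=; lia.
    * lia.
  + move=> i Hi. have := ZG i Hi. have Hi' : i < size G by rewrite -Hsz.
    have := G2 i Hi'. have := Y2 i Hi. rewrite nthZ //. lia.
- exact: szZ.
- apply/all2P; split; first by rewrite szZ.
  move=> i Hi. rewrite nthZ //. exact: leq_addr.
- apply/eqP => E. have := congr1 (fun s => nth 0 s t) E. rewrite /= nthZ //.
  rewrite bE leqnn subnn muln0 addn0 eqxx /=. lia.
split.
- apply/all2P; split; first by rewrite szZ.
  move=> i Hi. rewrite szZ in Hi. exact: ZG.
- apply/all2P; split; first by rewrite szZ size_map.
  move=> i Hi. rewrite szZ in Hi. rewrite nthZ // (nth_map 0) //.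
  by case: (b i) => /=; lia.
- apply/fsubsetP => x Hx.
  have /mem_dsP [p Hp Hpx] := fsubsetP HtY x Hx.
  have /mem_dsP [q Hq Hqx] := fsubsetP HtG x Hx.
  apply/mem_dsP. rewrite szZ.
  clear Hx HtY HtG HYG Hne exP Hmin ZG bnd.
  case Hbp: (b p).
  + case/orP: Hpx => [/eqP Hpx|/eqP Hpx].
    *
      move: (Hbp); rewrite bE => /andP [Htp /eqP Hyp].
      case: (ltngtP p t) => Hpt; first lia.
      -- exists p.-1; first lia.
         have Hp1 : p.-1.+1 < size Y by lia.
         have := Y1 p.-1 Hp1. rewrite (_ : p.-1.+1 = p); last by lia.
         have Htp1 : t <= p.-1 by lia.
         have := gap_nth2 sY Htp1 (ltnW Hp1) => H1 H2.
         have Hb1 : b p.-1.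
           rewrite bE Htp1 /=. apply/eqP. lia.
         rewrite nthZ; last lia. rewrite Hb1 /=. lia.
      -- exfalso. subst p.
         rewrite -Hsz in Hq.
         case: (ltnP q t) => Hqt.
         ++ have := HminP q Hq Hqt. have := gap_nth2 sY (ltnW Hqt) Ht. lia.
         ++ have Ht' : t < size G by rewrite -Hsz.
            have Hq' : q < size G by rewrite -Hsz.
            have := gap_nth2 sG Hqt Hq'. lia.
    * exists p => //. rewrite nthZ // Hbp /=. lia.
  + exists p => //. rewrite nthZ // Hbp /= addn0. exact: Hpx.
Qed.

Lemma iterate (PT APr : seq nat -> Prop) (m n r : nat) (G : seq nat)
  (tau : {fset nat}) :
  good m n G -> size G = r -> ~ PT G ->
  (forall Y, good m n Y -> size Y = r -> PT Y -> APr (map succn Y)) ->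
  tau `<=` domset G ->
  forall Y, good m n Y -> size Y = r -> all2 leq Y G -> tau `<=` domset Y ->
  (exists H, APr H /\ all2 leq Y H) ->
  exists X, [/\ good m n X, size X = r, tau `<=` domset X, ~ PT X &
                exists H, APr H /\ all2 leq X H].
Proof.
move=> HG HGr HnG Hsh HtG Y.
have [N] := ubnP (sumn G - sumn Y). elim: N Y => // N IH Y HN HY HYr HYG HtY HH.
case: (classic (PT Y)) => HPT; last by exists Y.
have HA := Hsh Y HY HYr HPT.
case: (eqVneq Y G) => EYG.
  by subst Y.
have [Z [HZ1 HZ2 HZ3 HZ4 [HZ5 HZ6 HZ7]]] :=
  step HY HG (etrans HYr (esym HGr)) HYG EYG HtY HtG.
apply: (IH Z) => //.
- have := sumn_lt HZ3 HZ4. have := sumn_le HZ5. lia.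
- by rewrite HZ2.
- by exists (map succn Y).
Qed.


Lemma in_intv x a b : (x \in intv a b) = (a <= x <= b).
Proof. rewrite /intv inE mem_iota. case: (leqP a x) => //= H. lia. Qed.

Lemma intv_cons i s : intv i i.+1 `|` domset s = domset (i :: s).
Proof.
apply/fsetP => x. rewrite in_fsetU in_intv !mem_ds flat_cons !inE.
case: (x \in flat s); rewrite ?orbT ?orbF //. lia.
Qed.

Lemma Fam_anti r m m' n A B : Fam r m n A -> Fam r m' n B -> A `<=` B -> A = B.
Proof.
move=> /Fam_good [s [Hs Hgs ->]] /Fam_good [t [Ht Hgt ->]] Hst.
have sS := good_sorted Hgs. have sT := good_sorted Hgt.
apply/eqP. by rewrite eqEfcard Hst /= (card_ds sS) (card_ds sT) Hs Ht.
Qed.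

Lemma facets_gen (Fs : setfam) F :
  (forall A B, Fs A -> Fs B -> A `<=` B -> A = B) ->
  (facets (gen Fs) F <-> Fs F).
Proof.
move=> Hanti; split.
- move=> [[G [HG HFG]] Hmax].
  have E : G = F by apply: Hmax => //; exists G; split => //; exact: fsubset_refl.
  by rewrite -E.
- move=> HF; split; first by exists F; split => //; exact: fsubset_refl.
  move=> G [G' [HG' HGG']] HFG.
  have E := Hanti F G' HF HG' (fsubset_trans HFG HGG'). subst G'.
  apply/eqP; by rewrite eqEfsubset HGG' HFG.
Qed.

Lemma join_gen_simplex (P : setfam) V s :
  join (gen P) (simplex V) s <-> exists F, P F /\ s `<=` F `|` V.
Proof.
split.
- move=> [a [b [[F [HF HaF]] HbV ->]]]. exists F; split => //. exact: fsetUSS.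
- move=> [F [HF Hs]]. exists (s `&` F), (s `&` V); split.
  + exists F; split => //; exact: fsubsetIr.
  + exact: fsubsetIr.
  + rewrite -fsetIUr. apply/esym/fsetIidPl. exact: Hs.
Qed.

Lemma incvec_inj A B : incvec A = incvec B -> A = B.
Proof.
move=> E. apply/fsetP => x.
have : (x \in incvec A) = (x \in incvec B) by rewrite E.
by rewrite /incvec !mem_sort.
Qed.

Lemma sumn_bound l n : all (fun x => x <= n) l -> sumn l <= n * size l.
Proof.
elim: l => [|a l IH] //= /andP [Ha Hl]. have := IH Hl. rewrite mulnS. lia.
Qed.

Lemma lep_refl A : lep A A.
Proof. exact: all2_leq_refl. Qed.

Lemma lep_trans A B C : lep A B -> lep B C -> lep A C.
Proof. exact: all2_leq_trans. Qed.

Lemma exists_max (P : setfam) n G : P G ->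
  (forall H, P H -> forall x, x \in H -> x <= n) ->
  exists H, [/\ P H, lep G H & forall H', P H' -> lep H H' -> H' = H].
Proof.
move=> HG Hb.
suff: forall N H, n * size (incvec G) - sumn (incvec H) < N -> P H -> lep G H ->
  exists H0, [/\ P H0, lep G H0 & forall H', P H' -> lep H0 H' -> H' = H0].
  by move=> /(_ _ G (ltnSn _) HG (lep_refl G)).
elim=> // N IH H HN HH HGH.
case: (classic (exists H', [/\ P H', lep H H' & H' <> H])) => [[H' [HH' HHH' Hne]]|Hno].
- apply: (IH H') => //; last exact: lep_trans HGH HHH'.
  have Hne' : incvec H != incvec H'.
    apply/eqP => E. apply: Hne. by rewrite (incvec_inj E).
  have H1 := sumn_lt HHH' Hne'.
  have H2 : sumn (incvec H') <= n * size (incvec H').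
    apply: sumn_bound. apply/allP => x. rewrite mem_sort => Hx. exact: Hb HH' x Hx.
  have [E1 _] := all2P _ _ _ (lep_trans HGH HHH').
  rewrite -E1 in H2. lia.
- exists H; split => // H' HH' HHH'. apply: NNPP => Hne. apply: Hno. by exists H'.
Qed.

Definition IdX (X : setfam) k n t :=
  exists tF, [/\ X (domset tF), good 1 n tF, size tF = k & all2 leq t tF].

Lemma sorted_cons i m n s : i.+2 <= m -> good m n s -> sorted gap2 (i :: s).
Proof.
move=> Hi /andP [Hs /allP Ha]. case: s Hs Ha => [|b s] //= Hs Ha.
rewrite Hs andbT /gap2. have := Ha b (mem_head _ _). lia.
Qed.

Lemma good_cons i m m' n s : m' <= i -> i < n -> i.+2 <= m -> good m n s ->
  good m' n (i :: s).
Proof.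
move=> H1 H2 H3 Hg. apply/andP; split; first exact: sorted_cons H3 Hg.
move: Hg => /andP [_ Ha] /=. rewrite H1 H2 /=. apply/allP => x /(allP Ha). lia.
Qed.

Lemma ideal_cons (X : setfam) k n i s :
  (forall F, X F -> Fam k 1 n F) -> 1 <= i -> good (i + 2) n s ->
  (ideal k n X (domset (i :: s)) <-> IdX X k n (i :: s)).
Proof.
move=> Hac Hi Hs. have Hsc : sorted gap2 (i :: s) by apply: sorted_cons Hs; lia.
split.
- move=> [_ [F [XF Hlep]]]. have /Fam_good [tF [HtF1 HtF2 E]] := Hac F XF.
  subst F. exists tF; split => //. rewrite -lep_ds //. exact: good_sorted HtF2.
- move=> [tF [XF HtF1 HtF2 Hle]]. split.
  + apply/Fam_good. exists (i :: s); split => //.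
    * have [E _] := all2P _ _ _ Hle. by rewrite E.
    * apply: (good_cons (m := i + 2)) => //; last lia.
      have [E Hle'] := all2P _ _ _ Hle. have := Hle' 0 isT.
      have [_ R] := (goodP _ _ _).1 HtF1. have := R 0. rewrite -E /= => /(_ isT). lia.
  + exists (domset tF); split => //. rewrite lep_ds //. exact: good_sorted HtF1.
Qed.


Definition PJ (X : setfam) r n i H :=
  [/\ Fam r 1 n H, H `<=` intv (i + 2) n & ideal r.+1 n X (intv i i.+1 `|` H)].

Lemma SJ_char X r n i H : SJ r.+1 n X 1 i H <->
  (PJ X r n i H /\ forall H', PJ X r n i H' -> lep H H' -> H' = H).
Proof.
have E1 : i + 2 * 1 - 1 = i.+1 by lia.
have E2 : r.+1 - 1 = r by lia.
rewrite /SJ /PJ E1 E2 muln1. by [].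
Qed.

Lemma PJ_char (X : setfam) r n i H :
  (forall F, X F -> Fam r.+1 1 n F) -> 1 <= i ->
  (PJ X r n i H <-> exists s, [/\ H = domset s, size s = r, good (i + 2) n s &
                                  IdX X r.+1 n (i :: s)]).
Proof.
move=> Hac Hi. split.
- move=> [/Fam_good [s [Hs Hg E]] Hsub Hid]. subst H.
  have Hg2 : good (i + 2) n s.
    apply/goodP. have [G1 G2] := (goodP _ _ _).1 Hg. split => // l Hl.
    have := G2 l Hl.
    have : nth 0 s l \in intv (i + 2) n.
      apply: (fsubsetP Hsub). apply/mem_dsP. exists l => //. by rewrite eqxx.
    rewrite in_intv. lia.
  exists s; split => //. apply/ideal_cons => //. by rewrite -intv_cons.
- move=> [s [E Hs Hg Hid]]. subst H. split.
  + apply/Fam_good. exists s; split => //. apply: good_mono Hg. lia.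
  + apply/fsubsetP => x /mem_dsP [l Hl Hx].
    have [_ G2] := (goodP _ _ _).1 Hg. have := G2 l Hl. rewrite in_intv. lia.
  + rewrite intv_cons. by apply/ideal_cons.
Qed.

Lemma Gen_char (X : setfam) r n i m G :
  (forall F, X F -> Fam r.+1 1 n F) -> 1 <= i -> 1 <= m ->
  ((ideal r n (SJ r.+1 n X 1 i) G /\ Fam r m n G) <->
  exists s, [/\ G = domset s, size s = r, good m n s &
     exists s', [/\ size s' = r, good (i + 2) n s', IdX X r.+1 n (i :: s') &
                    all2 leq s s']]).
Proof.
move=> Hac Hi Hm. split.
- move=> [[_ [H [/SJ_char [HP _] Hlep]]] /Fam_good [s [Hs Hg E]]]. subst G.
  have /(PJ_char _ Hac Hi) [s' [E' Hs' Hg' Hid]] := HP. subst H.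
  exists s; split => //. exists s'; split => //.
  rewrite -lep_ds //; [exact: good_sorted Hg | exact: good_sorted Hg'].
- move=> [s [E Hs Hg [s' [Hs' Hg' Hid Hle]]]]. subst G. split; last first.
    by apply/Fam_good; exists s.
  split.
    apply/Fam_good; exists s; split => //. apply: good_mono Hg. exact: Hm.
  have HP : PJ X r n i (domset s').
    apply/(PJ_char _ Hac Hi). by exists s'.
  have Hb : forall H, PJ X r n i H -> forall x, x \in H -> x <= n.
    move=> H [_ Hsub _] x Hx. have := fsubsetP Hsub x Hx. rewrite in_intv. lia.
  have [H0 [HP0 Hl0 Hmax]] := exists_max HP Hb.
  exists H0; split.
  + apply/SJ_char. by split.
  + apply: lep_trans Hl0. rewrite lep_ds //; [exact: good_sorted Hg | exact: good_sorted Hg'].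
Qed.


Lemma JC r n X Y m m' V s :
  join (cdiff (Bc r n X m) (Bc r n Y m')) (simplex V) s <->
  exists F, ((ideal r n X F /\ Fam r m n F) /\ ~ (ideal r n Y F /\ Fam r m' n F))
            /\ s `<=` F `|` V.
Proof.
have antiX : forall A B, (ideal r n X A /\ Fam r m n A) -> (ideal r n X B /\ Fam r m n B) ->
  A `<=` B -> A = B.
  move=> A B [_ HA] [_ HB]. exact: Fam_anti HA HB.
have antiY : forall A B, (ideal r n Y A /\ Fam r m' n A) -> (ideal r n Y B /\ Fam r m' n B) ->
  A `<=` B -> A = B.
  move=> A B [_ HA] [_ HB]. exact: Fam_anti HA HB.
rewrite /cdiff /Bc. split.
- move=> /join_gen_simplex [F [[HF1 HF2] Hs]]. exists F; split => //. split.
  + by apply/(facets_gen _ antiX).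
  + move=> H; apply: HF2. by apply/(facets_gen _ antiY).
- move=> [F [[HF1 HF2] Hs]]. apply/join_gen_simplex. exists F; split => //. split.
  + by apply/(facets_gen _ antiX).
  + move=> /(facets_gen _ antiY) H; exact: HF2 H.
Qed.

Lemma flat_inj s t : flat s = flat t -> s = t.
Proof.
elim: s t => [|a s IH] [|b t] //; rewrite !flat_cons //.
by case=> -> _ /IH ->.
Qed.

Lemma ds_inj s t : sorted gap2 s -> sorted gap2 t -> domset s = domset t -> s = t.
Proof.
move=> Hs Ht E. apply: flat_inj. by rewrite -(incvec_ds Hs) -(incvec_ds Ht) E.
Qed.

Lemma IdX_down X k n t t' : IdX X k n t -> all2 leq t' t -> IdX X k n t'.
Proof.
move=> [tF [H1 H2 H3 H4]] Hle. exists tF; split => //. exact: all2_leq_trans Hle H4.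
Qed.

Lemma ds_range m n s x : good m n s -> x \in domset s -> m <= x <= n.
Proof.
move=> Hg /mem_dsP [l Hl Hx]. have [_ G2] := (goodP _ _ _).1 Hg. have := G2 l Hl. lia.
Qed.

Lemma all2_shift s t u : all2 leq s t -> all2 (fun a b => a.+1 <= b) t u ->
  all2 leq (map succn s) u.
Proof.
elim: s t u => [|a s IH] [|b t] [|c u] //= /andP [H1 H2] /andP [H3 H4].
rewrite (IH _ _ H2 H4) andbT. lia.
Qed.

Lemma all2_lt_n s t n : all2 leq s t -> good 1 n t -> forall l, l < size s -> nth 0 s l < n.
Proof.
move=> /all2P [E H] Hg l Hl. have := H l Hl. have [_ G2] := (goodP _ _ _).1 Hg.
have := G2 l. rewrite -E => /(_ Hl). lia.
Qed.

Lemma join_cover j n X x : good (j + 2) n X -> x \in domset X ->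
  x = j + 2 \/ x \in domset (mkseq (fun l => maxn (nth 0 X l) (j + 3 + 2 * l)) (size X)).
Proof.
move=> Hg /mem_dsP [p Hp Hpx].
have [G1 G2] := (goodP _ _ _).1 Hg. have Hlo := good_lo Hg Hp.
case: (leqP (j + 3 + 2 * p) (nth 0 X p)) => Hc.
- right. apply/mem_dsP. rewrite size_mkseq. exists p => //. rewrite nth_mkseq //.
  rewrite (_ : maxn _ _ = nth 0 X p) //. lia.
- have E : nth 0 X p = j + 2 + 2 * p by lia.
  case/orP: Hpx => /eqP Hx.
  + case: p Hp Hlo Hc E Hx => [|p] Hp Hlo Hc E Hx; first by left; lia.
    right. apply/mem_dsP. rewrite size_mkseq. exists p; first lia.
    rewrite nth_mkseq; last lia. have := G1 p Hp. lia.
  + right. apply/mem_dsP. rewrite size_mkseq. exists p => //. rewrite nth_mkseq //. lia.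
Qed.


End Helpers.

Unset Implicit Arguments.

Theorem lemma3p10 (k n : nat) (S T : setfam) (j : nat) :
  1 <= k -> 2 * k <= n ->
  antichain k n S -> antichain k n T -> precp_fam T S ->
  1 <= j ->
  ~ voidc (Dc k n S T j.+1) ->
  ceq (cap (Dc k n S T j) (Dc k n S T j.+1))
      (join (cdiff (Bc (k - 1) n (SJ k n S 1 j.+1) (j + 2))
                   (Bc (k - 1) n (SJ k n T 1 j) (j + 2)))
            (simplex [fset j.+1])).
Proof.
Local Open Scope nat_scope.
case: k => [//|r] _ _ [ACS _] [ACT _] Hprec Hj _.
rewrite /ceq /cap /Dc (_ : r.+1 - 1 = r); last lia.
move=> sg.
pose PT := fun Y => IdX T r.+1 n (j :: Y).
pose APr := fun H => [/\ good (j.+1 + 2) n H, size H = r & IdX S r.+1 n (j.+1 :: H)].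
have Hsh : forall Y, good (j + 2) n Y -> size Y = r -> PT Y -> APr (map succn Y).
  move=> Y HY HYr [tF [XF HtF HtFs Hle]].
  have [F [SF Hpr]] := Hprec _ XF.
  have /Fam_good [tF' [HtF's HtF' E]] := ACS F SF. subst F.
  rewrite precp_ds in Hpr; [|exact: good_sorted HtF|exact: good_sorted HtF'].
  have Hle' : all2 leq (map succn (j :: Y)) tF' := all2_shift Hle Hpr.
  have Hlt := all2_lt_n Hle' HtF'.
  split.
  - apply/goodP. have [Y1 Y2] := (goodP _ _ _).1 HY. rewrite size_map. split.
    + move=> i Hi. rewrite !(nth_map 0) //; last lia. have := Y1 i Hi. lia.
    + move=> i Hi. rewrite (nth_map 0) //. have := Y2 i Hi.
      have := Hlt i.+1. rewrite /= size_map => /(_ Hi). rewrite (nth_map 0) //. lia.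
  - by rewrite size_map.
  - exists tF'; split => //.
have GenS := fun i m => @Gen_char S r n i m _ ACS.
have GenT := fun i m => @Gen_char T r n i m _ ACT.
split.
- move=> [/JC [F1 [[HS1 HT1] Hs1]] /JC [F2 [[HS2 HT2] Hs2]]].
  have [s1 [E1 Hs1r Hg1 [s1' [_ Hg1' Hid1 Hle1]]]] := (GenS _ j (j + 2) Hj (ltn_addl _ (ltn0Sn 1))).1 HS1.
  have [s2 [E2 Hs2r Hg2 [s2' [Hs2r' Hg2' Hid2 Hle2]]]] := (GenS _ j.+1 (j.+1 + 2) (ltn0Sn _) (ltn_addl _ (ltn0Sn 1))).1 HS2.
  subst F1 F2.
  have HnPT : ~ PT s1.
    move=> HPT. apply: HT1. apply/(GenT _ j (j + 2) Hj (ltn_addl _ (ltn0Sn 1))).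
    exists s1; split => //. exists s1; split => //. exact: all2_leq_refl.
  pose tau := sg `\` [fset j.+1].
  have Htau1 : tau `<=` domset s1.
    apply/fsubsetP => x. rewrite in_fsetD in_fset1 => /andP [Hx1 Hx].
    have := fsubsetP Hs1 x Hx. rewrite in_fsetU in_intv => /orP [//|Hxj].
    have := fsubsetP Hs2 x Hx. rewrite in_fsetU in_intv => /orP [Hx2|Hx2].
    + exfalso. have := ds_range Hg2 Hx2. move: Hx1 Hxj. clear -j. lia.
    + exfalso. move: Hx1 Hxj Hx2. clear -j. lia.
  have Htau2 : forall x, x \in tau -> x != j + 2 -> x \in domset s2.
    move=> x. rewrite in_fsetD in_fset1 => /andP [Hx1 Hx] Hx3.
    have := fsubsetP Hs2 x Hx. rewrite in_fsetU in_intv => /orP [//|Hxj].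
    exfalso. move: Hx1 Hxj Hx3. clear -j. lia.
  have Hg2m : good (j + 2) n s2 by apply: good_mono Hg2; lia.
  have Hsz : size s1 = size s2 by rewrite Hs1r Hs2r.
  have HY0 : tau `<=` domset (meetS s1 s2).
    apply/fsubsetP => x Hx.
    have Hx1 := fsubsetP Htau1 x Hx.
    case: (eqVneq x (j + 2)) => Hxe.
    + subst x. move/mem_dsP: Hx1 => [p Hp Hpx].
      have := good_lo Hg1 Hp. move: Hpx => Hpx Hlo.
      have Hp0 : p = 0 by move: Hpx Hlo; clear -j; lia.
      subst p. apply/mem_dsP. exists 0; first by rewrite size_meetS.
      rewrite nth_meetS //. have Hp2 : 0 < size s2 by rewrite -Hsz.
      have := good_lo Hg2 Hp2. move: Hpx Hlo. clear -j. lia.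
    + apply: meet_mem => //; [exact: good_sorted Hg1|exact: good_sorted Hg2|].
      exact: Htau2.
  have Hit := @iterate PT APr (j + 2) n r s1 tau Hg1 Hs1r HnPT Hsh Htau1
    (meetS s1 s2) (meet_good Hsz Hg1 Hg2m) (etrans (size_meetS _ _) Hs1r)
    (meet_le_l _ _) HY0.
  have [X [HX1 HX2 HX3 HX4 [H [HH1 HH2]]]] : exists X, [/\ good (j + 2) n X, size X = r,
      tau `<=` domset X, ~ PT X & exists H, APr H /\ all2 leq X H].
    apply: Hit. exists s2'; split.
    + split => //.
    + apply: all2_leq_trans Hle2. exact: meet_le_r.
  apply/JC. exists (domset X); split; first split.
  + apply/(GenS _ j.+1 (j + 2) (ltn0Sn _) (ltn_addl _ (ltn0Sn 1))).
    case: HH1 => HH1 HH2' HH3.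
    exists X; split => //. exists H; split => //.
  + move/(GenT _ j (j + 2) Hj (ltn_addl _ (ltn0Sn 1))) => [s [E Hs Hg [s' [_ _ Hid Hle]]]].
    have EX : X = s by apply: ds_inj E; [exact: good_sorted HX1|exact: good_sorted Hg].
    subst s. apply: HX4. rewrite /PT. apply: (IdX_down Hid). by rewrite /= leqnn Hle.
  + apply/fsubsetP => x Hx. rewrite in_fsetU in_fset1.
    case: (eqVneq x j.+1) => [->|Hne]; first by rewrite orbT.
    rewrite (fsubsetP HX3) //. by rewrite in_fsetD in_fset1 Hne Hx.
- move=> /JC [F [[HS HT] Hs]].
  have [X [E Hr Hg [H [Hr' HgH HidH HleH]]]] := (GenS _ j.+1 (j + 2) (ltn0Sn _) (ltn_addl _ (ltn0Sn 1))).1 HS.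
  subst F.
  have HidX : IdX S r.+1 n (j :: X).
    apply: (IdX_down HidH). by rewrite /= leqnSn HleH.
  split.
  + apply/JC. exists (domset X); split; first split => //.
    * apply/(GenS _ j (j + 2) Hj (ltn_addl _ (ltn0Sn 1))).
      exists X; split => //. exists X; split => //. exact: all2_leq_refl.
    * apply/fsubsetP => x Hx. rewrite in_fsetU in_intv.
      have := fsubsetP Hs x Hx. rewrite in_fsetU in_fset1 => /orP [->//|/eqP ->].
      by rewrite leqnSn leqnn orbT.
  + pose Gs := mkseq (fun l => maxn (nth 0 X l) (j + 3 + 2 * l)) (size X).
    have [X1 X2] := (goodP _ _ _).1 Hg. have [H1 H2] := (goodP _ _ _).1 HgH.
    have [_ HXH] := all2P _ _ _ HleH.
    have GsH : all2 leq Gs H.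
      apply/all2P. rewrite size_mkseq Hr Hr'. split => // l Hl.
      rewrite nth_mkseq; last by rewrite Hr.
      have Hl' : l < size H by rewrite Hr'.
      have Hl2 : l < size X by rewrite Hr.
      have := good_lo HgH Hl'. have := HXH l Hl2. clear -j. lia.
    have HgGs : good (j.+1 + 2) n Gs.
      apply/goodP. rewrite size_mkseq. split.
      - move=> i Hi. rewrite !nth_mkseq //; last lia. have := X1 i Hi. lia.
      - move=> i Hi. rewrite nth_mkseq //. have [_ GsH'] := all2P _ _ _ GsH.
        have := GsH' i. rewrite size_mkseq nth_mkseq // => /(_ Hi).
        have Hi' : i < size H by rewrite Hr'; rewrite Hr in Hi.
        have := H2 i Hi'. lia.
    have XGs : all2 leq X Gs.
      apply/all2P. rewrite size_mkseq. split => // l Hl. rewrite nth_mkseq //. exact: leq_maxl.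
    apply/JC. exists (domset Gs); split; first split.
    * apply/(GenS _ j.+1 (j.+1 + 2) (ltn0Sn _) (ltn_addl _ (ltn0Sn 1))).
      exists Gs; split => //; first by rewrite size_mkseq.
      exists H; split => //.
    * move/(GenT _ j.+1 (j.+1 + 2) (ltn0Sn _) (ltn_addl _ (ltn0Sn 1))) => [s [E Hs' Hgs [s' [_ _ Hid Hle]]]].
      have EX : Gs = s by apply: ds_inj E; [exact: good_sorted HgGs|exact: good_sorted Hgs].
      subst s. apply: HT. apply/(GenT _ j (j + 2) Hj (ltn_addl _ (ltn0Sn 1))).
      exists X; split => //. exists X; split => //; last exact: all2_leq_refl.
      apply: (IdX_down Hid). rewrite /= leqnSn /=. exact: all2_leq_trans XGs Hle.
    * apply/fsubsetP => x Hx. rewrite in_fsetU in_intv.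
      have := fsubsetP Hs x Hx. rewrite in_fsetU in_fset1 => /orP [Hx'|/eqP ->]; last first.
        by rewrite leqnn leqnSn orbT.
      case: (join_cover Hg Hx') => [->|->//].
      have -> : (j.+1 <= j + 2 <= j.+2) = true by clear -j; lia.
      by rewrite orbT.
Qed.
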